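(* Let $S$ be an additively reduced semidomain and $G$ a torsion-free abelian group. Let $f=\sum_{i=0}^n s_ix^{g_i}\in S[G]$ with $g_0>g_1>\dots>g_n$ and $s_i\in S\setminus\{0\}$. Then: (1) if $|\operatorname{supp}(f)|\ge2$ and $2g_1<g_0+g_n$, then $f$ is monolithic; (2) if $|\operatorname{supp}(f)|>3$ and $2g_1\le g_0+g_n$, then $f$ is monolithic.
   Context: A semidomain is a subsemiring (containing $0$ and $1$) of an integral domain. $S$ is additively reduced if $0$ is the only invertible element of $(S,+)$. $G$ carries a fixed total order compatible with addition. $S[G]$ is the semidomain of formal finite sums $\sum_{g\in G}s_gx^g$ with polynomial operations; $\operatorname{supp}(f)$ is the set of exponents with nonzero coefficient. A nonzero $f\in S[G]$ is monolithic if whenever $f=pq$ with $p,q\in S[G]$, one of $p,q$ is a monomial $sx^g$. *)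

(* Defs.v *)
From HB Require Import structures.
From mathcomp Require Import all_boot all_order all_algebra.
From mathcomp Require Import finmap.
Set Implicit Arguments. Unset Strict Implicit. Unset Printing Implicit Defensive.
Import GRing.Theory.
Local Open Scope ring_scope.

Definition semidomain (R : idomainType) (S : {pred R}) : Prop :=
  [/\ 0 \in S, 1 \in S,
      (forall x y, x \in S -> y \in S -> x + y \in S) &
      (forall x y, x \in S -> y \in S -> x * y \in S)].

(* 0 is the only invertible element of (S,+). *)
Definition additively_reduced (R : idomainType) (S : {pred R}) : Prop :=
  forall x y, x \in S -> y \in S -> x + y = 0 -> x = 0.

Definition torsion_free (G : zmodType) : Prop :=
  forall (x : G) (k : nat), (0 < k)%N -> x *+ k = 0 -> x = 0.

Definition compatible_total_order (G : zmodType) (le : rel G) : Prop :=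
  [/\ reflexive le, antisymmetric le, transitive le, total le &
      (forall a b c, le a b -> le (a + c) (b + c))].

Definition ltof (G : zmodType) (le : rel G) (a b : G) : bool := le a b && (a != b).

(* Elements of R[G]: finitely supported coefficient functions G -> R.
   S[G] consists of those whose coefficients all lie in S. *)
Definition gpoly (R : idomainType) (G : zmodType) := {fsfun G -> R with 0}.

Definition in_SG (R : idomainType) (G : zmodType) (S : {pred R}) (p : gpoly R G) : Prop :=
  forall h, p h \in S.

Definition gmul (R : idomainType) (G : zmodType) (p q : gpoly R G) (h : G) : R :=
  \sum_(a <- finsupp p) \sum_(b <- finsupp q | a + b == h) p a * q b.

Definition is_monomial (R : idomainType) (G : zmodType) (p : gpoly R G) : Prop :=
  exists (s : R) (g : G), forall h, p h = (if h == g then s else 0).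

Definition monolithic (R : idomainType) (G : zmodType) (S : {pred R}) (f : G -> R) : Prop :=
  (exists h, f h != 0) /\
  forall p q : gpoly R G, in_SG S p -> in_SG S q ->
    (forall h, f h = gmul p q h) -> is_monomial p \/ is_monomial q.

(* Main.v *)
Require Import Defs.
From HB Require Import structures.
From mathcomp Require Import all_boot all_order all_algebra.
From mathcomp Require Import finmap.
From Stdlib Require Import Classical.
Set Implicit Arguments.
Import GRing.Theory.
Local Open Scope ring_scope.


Lemma o_anti (G : zmodType) (le : rel G) (hle : compatible_total_order le) a b :
  le a b -> le b a -> a = b.
Proof. by case: hle => _ an _ _ _ h1 h2; apply: an; rewrite h1 h2. Qed.
Arguments o_anti {G le} hle {a b}.

Lemma o_trans (G : zmodType) (le : rel G) (hle : compatible_total_order le) a b c :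
  le a b -> le b c -> le a c.
Proof. by case: hle => _ _ tr _ _ h1 h2; apply: tr h1 h2. Qed.
Arguments o_trans {G le} hle {a b c}.

Lemma o_refl (G : zmodType) (le : rel G) (hle : compatible_total_order le) a : le a a.
Proof. by case: hle => rf _ _ _ _; apply: rf. Qed.

Lemma o_addr (G : zmodType) (le : rel G) (hle : compatible_total_order le) a b c :
  le a b -> le (a + c) (b + c).
Proof. by case: hle => _ _ _ _ ad; apply: ad. Qed.
Arguments o_addr {G le} hle {a b} c.

Lemma o_addl (G : zmodType) (le : rel G) (hle : compatible_total_order le) a b c :
  le a b -> le (c + a) (c + b).
Proof. by move=> h; rewrite ![c + _]addrC; apply: o_addr. Qed.
Arguments o_addl {G le} hle {a b} c.

Lemma o_add2 (G : zmodType) (le : rel G) (hle : compatible_total_order le) a b c d :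
  le a b -> le c d -> le (a + c) (b + d).
Proof.
move=> h1 h2; apply: (o_trans hle (o_addr hle c h1)); exact: o_addl.
Qed.
Arguments o_add2 {G le} hle {a b c d}.

Lemma o_cancel (G : zmodType) (le : rel G) (hle : compatible_total_order le) a b c :
  le (a + c) (b + c) -> le a b.
Proof. by move=> h; have := o_addr hle (- c) h; rewrite !addrK. Qed.
Arguments o_cancel {G le} hle {a b} c.

Lemma o_cancell (G : zmodType) (le : rel G) (hle : compatible_total_order le) a b c :
  le (c + a) (c + b) -> le a b.
Proof. by rewrite ![c + _]addrC; apply: o_cancel. Qed.
Arguments o_cancell {G le} hle {a b} c.

Lemma o_sum_eq (G : zmodType) (le : rel G) (hle : compatible_total_order le) a b c d :
  le a b -> le c d -> a + c = b + d -> a = b.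
Proof.
move=> h1 h2 e; apply: (o_anti hle h1); apply: (o_cancel hle c).
rewrite e; exact: o_addl.
Qed.
Arguments o_sum_eq {G le} hle {a b c d}.

Lemma o_max (G : zmodType) (le : rel G) (hle : compatible_total_order le) (r : seq G) x :
  exists m, m \in x :: r /\ forall y, y \in x :: r -> le y m.
Proof.
elim: r x => [|y r IH] x.
  by exists x; split; [rewrite inE|move=> y; rewrite inE => /eqP ->; apply: o_refl].
have [m [hm hmax]] := IH y.
case: hle => rf an tr tot ad.
have := tot x m; case/orP => hxm.
  exists m; split; first by rewrite inE hm orbT.
  move=> z; rewrite inE => /orP[/eqP ->//|]; exact: hmax.
exists x; split; first by rewrite inE eqxx.
move=> z; rewrite inE => /orP[/eqP ->|hz]; first exact: rf.
exact: tr (hmax z hz) hxm.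
Qed.

Lemma sumS (R : idomainType) (S : {pred R}) (hS : semidomain S)
  (I : eqType) (r : seq I) (P : pred I) (F : I -> R) :
  (forall i, F i \in S) -> \sum_(i <- r | P i) F i \in S.
Proof.
case: hS => h0 _ hadd _ hF; elim: r => [|x r IH]; first by rewrite big_nil.
by rewrite big_cons; case: (P x) => //; apply: hadd.
Qed.

Lemma sumS_eq0 (R : idomainType) (S : {pred R}) (hS : semidomain S)
  (hred : additively_reduced S)
  (I : eqType) (r : seq I) (P : pred I) (F : I -> R) :
  (forall i, F i \in S) -> \sum_(i <- r | P i) F i = 0 ->
  forall i, i \in r -> P i -> F i = 0.
Proof.
move=> hF; elim: r => [|x r IH] //.
rewrite big_cons => e i; rewrite inE => /orP[/eqP ->|hi] hP.
  rewrite hP in e; move: e; apply: hred; [exact: hF | exact: sumS].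
apply: IH => //; case: (P x) e => // e.
rewrite addrC in e; exact: (hred _ _ (@sumS _ _ hS _ r P F hF) (hF x) e).
Qed.

Lemma gmul_neq0 (R : idomainType) (S : {pred R}) (hS : semidomain S)
  (hred : additively_reduced S) (G : zmodType) (p q : gpoly R G) h :
  in_SG S p -> in_SG S q ->
  (gmul p q h != 0 <-> exists a b, p a != 0 /\ q b != 0 /\ a + b = h).
Proof.
move=> hp hq; have hT : forall a b, p a * q b \in S.
  by move=> a b; case: hS => _ _ _ hm; apply: hm.
split.
  move=> H; apply: NNPP => Hn; move/eqP: H; apply.
  apply: big1_seq => a /andP[_ ha]; apply: big1_seq => b /andP[hab hb].
  exfalso; apply: Hn; exists a, b; rewrite -!mem_finsupp; split => //; split => //.
  exact/eqP.
move=> [a [b [ha [hb e]]]]; apply/eqP => H.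
have H2 := @sumS_eq0 _ _ hS hred _ _ _ _ (fun a => @sumS _ _ hS _ _ _ _ (fun b => hT a b)) H a.
rewrite mem_finsupp in H2; have {H2} H2 := H2 ha isT.
have H3 := @sumS_eq0 _ _ hS hred _ _ _ _ (fun b => hT a b) H2 b.
rewrite mem_finsupp e eqxx in H3; have /eqP := H3 hb isT.
by rewrite mulf_eq0 (negbTE ha) (negbTE hb).
Qed.

Lemma two_max (R : idomainType) (G : zmodType) (le : rel G)
  (hle : compatible_total_order le) (p : gpoly R G) :
  ~ is_monomial p -> exists a0 a1, [/\ p a0 != 0, p a1 != 0, a1 != a0,
    (forall a, p a != 0 -> le a a0) & (forall a, p a != 0 -> a != a0 -> le a a1)].
Proof.
move=> nm.
case E: (enum_fset (finsupp p)) => [|x r].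
  exfalso; apply: nm; exists 0, 0 => h.
  suff -> : p h = 0 by case: eqP.
  apply/eqP; apply: contraT => hh; rewrite -mem_finsupp in hh.
  by move: hh; rewrite -[h \in _]/(h \in enum_fset _) E.
have [a0 [ha0 hmax]] := o_max hle r x.
rewrite -E -[_ \in enum_fset _]/(_ \in finsupp p) mem_finsupp in ha0.
have hmax' : forall a, p a != 0 -> le a a0.
  by move=> a; rewrite -mem_finsupp -[_ \in finsupp p]/(_ \in enum_fset _) E; apply: hmax.
case E2: [seq a <- enum_fset (finsupp p) | a != a0] => [|y r2].
  exfalso; apply: nm; exists (p a0), a0 => h; case: eqP => [->//|/eqP hne].
  apply/eqP; apply: contraT => hh; rewrite -mem_finsupp in hh.
  have : h \in [seq a <- enum_fset (finsupp p) | a != a0] by rewrite mem_filter hne.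
  by rewrite E2.
have [a1 [ha1 hmax1]] := o_max hle r2 y.
rewrite -E2 mem_filter in ha1; case/andP: ha1 => ha1 ha1'.
exists a0, a1; split => //.
- by rewrite -mem_finsupp.
- move=> a ha hne; apply: hmax1; rewrite -E2 mem_filter hne.
  by rewrite -mem_finsupp in ha.
Qed.

Lemma core (G : zmodType) (le : rel G) (hle : compatible_total_order le)
  (n : nat) (g : nat -> G) (hg : forall i, (i < n)%N -> ltof le (g i.+1) (g i))
  (inA inB : G -> Prop) a0 a1 b0 b1
  (hA0 : inA a0) (hA1 : inA a1) (hA01 : a1 != a0)
  (hAm : forall a, inA a -> le a a0) (hAm1 : forall a, inA a -> a != a0 -> le a a1)
  (hB0 : inB b0) (hB1 : inB b1) (hB01 : b1 != b0)
  (hBm : forall b, inB b -> le b b0) (hBm1 : forall b, inB b -> b != b0 -> le b b1)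
  (hcl : forall a b, inA a -> inB b -> exists i, (i <= n)%N /\ g i = a + b)
  (hcov : forall i, (i <= n)%N -> exists a b, [/\ inA a, inB b & a + b = g i]) :
  (ltof le (g 1%N *+ 2) (g 0%N + g n) -> False) /\
  ((3 < n.+1)%N -> le (g 1%N *+ 2) (g 0%N + g n) -> False).
Proof.
have dec : forall i j, (i <= j)%N -> (j <= n)%N -> le (g j) (g i).
  move=> i j hij hjn; elim: j hij hjn => [|j IH] hij hjn.
    by rewrite leqn0 in hij; rewrite (eqP hij); apply: o_refl.
  case: (ltngtP i j.+1) hij => // [hlt|->] _; last exact: o_refl.
  have /andP[h1 _] := hg j hjn.
  rewrite ltnS in hlt; apply: (o_trans hle h1). exact: (IH hlt (ltnW hjn)).
have sdec : forall i j, (i < j)%N -> (j <= n)%N -> g j != g i.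
  move=> i j hij hjn; apply/eqP => e.
  have /andP[h1 h2] := hg i (leq_trans hij hjn).
  have h3 := dec i.+1 j hij hjn; rewrite e in h3.
  by move/eqP: h2; apply; apply: (o_anti hle h1 h3).
have e0 : g 0%N = a0 + b0.
  have [i [hi ei]] := hcl _ _ hA0 hB0.
  have [a [b [ha hb eab]]] := hcov 0%N isT.
  apply: (o_anti hle); last by rewrite -ei; apply: dec.
  rewrite -eab; apply: (o_add2 hle (hAm _ ha) (hBm _ hb)).
have g1 : forall a b, inA a -> inB b -> a + b != a0 + b0 -> le (a + b) (g 1%N).
  move=> a b ha hb hne; have [i [hi ei]] := hcl _ _ ha hb.
  case: i hi ei => [|i] hi ei; first by rewrite -ei e0 eqxx in hne.
  by rewrite -ei; apply: dec.
have h01 : le (a0 + b1) (g 1%N).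
  by apply: g1 => //; apply: contra hB01 => /eqP /addrI ->.
have h10 : le (a1 + b0) (g 1%N).
  by apply: g1 => //; apply: contra hA01 => /eqP /addIr ->.
have gn : forall a b, inA a -> inB b -> le (g n) (a + b).
  move=> a b ha hb; have [i [hi ei]] := hcl _ _ ha hb.
  by rewrite -ei; apply: dec.
have h11 := gn _ _ hA1 hB1.
have eX : (a0 + b1) + (a1 + b0) = (a0 + b0) + (a1 + b1).
  by rewrite addrACA [b1 + b0]addrC addrACA.
have key : le (g 0%N + g n) ((a0 + b1) + (a1 + b0)).
  by rewrite eX e0; apply: o_addl.
have key2 : le ((a0 + b1) + (a1 + b0)) (g 1%N *+ 2).
  by rewrite mulr2n; apply: o_add2.
split.
  move=> /andP[hl hne]; move/eqP: hne; apply.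
  apply: (o_anti hle hl (o_trans hle key key2)).
move=> h3 hl.
have E1 : (a0 + b1) + (a1 + b0) = g 1%N + g 1%N.
  rewrite -mulr2n; apply: (o_anti hle key2 (o_trans hle hl key)).
have E2 : g 0%N + g n = (a0 + b0) + (a1 + b1).
  rewrite -eX; apply: (o_anti hle key (o_trans hle key2 hl)).
have ea : a0 + b1 = g 1%N := o_sum_eq hle h01 h10 E1.
have eb : a1 + b0 = g 1%N.
  by apply: (o_sum_eq hle h10 h01); rewrite addrC.
have en : a1 + b1 = g n by move: E2; rewrite e0 => /addrI.
have Aonly : forall a, inA a -> a = a0 \/ a = a1.
  move=> a ha; case: (eqVneq a a0) => [->|hne]; first by left.
  right; apply: (o_anti hle (hAm1 _ ha hne)).
  apply: (o_cancel hle b1); rewrite en; exact: gn.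
have Bonly : forall b, inB b -> b = b0 \/ b = b1.
  move=> b hb; case: (eqVneq b b0) => [->|hne]; first by left.
  right; apply: (o_anti hle (hBm1 _ hb hne)).
  apply: (o_cancell hle a1); rewrite en; exact: gn.
have [a [b [ha hb eab]]] := hcov 2%N (ltnW h3).
have s02 := sdec 0%N 2%N isT (ltnW h3).
have s12 := sdec 1%N 2%N isT (ltnW h3).
have s2n := sdec 2%N n h3 (leqnn n).
move: eab; case: (Aonly _ ha) => ->; case: (Bonly _ hb) => -> eab.
- by rewrite -e0 in eab; rewrite eab eqxx in s02.
- by rewrite ea in eab; rewrite eab eqxx in s12.
- by rewrite eb in eab; rewrite eab eqxx in s12.
- by rewrite en in eab; rewrite eab eqxx in s2n.
Qed.

Theorem lemma3p2 (R : idomainType) (S : {pred R}) (G : zmodType) (le : rel G)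
  (hS : semidomain S) (hred : additively_reduced S)
  (htf : torsion_free G) (hle : compatible_total_order le)
  (n : nat) (s : nat -> R) (g : nat -> G)
  (hs : forall i, (i <= n)%N -> s i \in S /\ s i != 0)
  (hg : forall i, (i < n)%N -> ltof le (g i.+1) (g i)) :
  let f := fun h : G => \sum_(i < n.+1 | g i == h) s i in
  ((2 <= n.+1)%N -> ltof le (g 1%N *+ 2) (g 0%N + g n) -> monolithic S f) /\
  ((3 < n.+1)%N -> le (g 1%N *+ 2) (g 0%N + g n) -> monolithic S f).
Proof.
move=> f.
have f_neq0 : forall h, f h != 0 -> exists i, (i <= n)%N /\ g i = h.
  move=> h H; apply: NNPP => Hn; move/eqP: H; apply; apply: big1 => i /eqP gi.
  by exfalso; apply: Hn; exists i; split; [rewrite -ltnS ltn_ord|].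
have hsS : forall j : 'I_n.+1, s j \in S.
  by move=> j; have [] := hs j (ltn_ord j).
have f_g : forall i, (i <= n)%N -> f (g i) != 0.
  move=> i hi; apply/eqP => H.
  have hi' : (i < n.+1)%N by rewrite ltnS.
  have := @sumS_eq0 _ _ hS hred _ _ _ (fun j : 'I_n.+1 => s j) hsS H (Ordinal hi')
    (mem_index_enum _) (eqxx _).
  by move=> /= e; have [_ /eqP] := hs i hi; apply.
have mono : forall p q : gpoly R G, in_SG S p -> in_SG S q ->
    (forall h, f h = gmul p q h) -> ~ is_monomial p -> ~ is_monomial q ->
    (ltof le (g 1%N *+ 2) (g 0%N + g n) -> False) /\
    ((3 < n.+1)%N -> le (g 1%N *+ 2) (g 0%N + g n) -> False).
  move=> p q hp hq hf np nq.
  have [a0 [a1 [hA0 hA1 hA01 hAm hAm1]]] := two_max hle np.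
  have [b0 [b1 [hB0 hB1 hB01 hBm hBm1]]] := two_max hle nq.
  apply: (@core G le hle n g hg (fun a => p a != 0) (fun b => q b != 0) a0 a1 b0 b1
    hA0 hA1 hA01 hAm hAm1 hB0 hB1 hB01 hBm hBm1).
    move=> a b ha hb; apply: f_neq0; rewrite hf.
    by apply/(gmul_neq0 hS hred _ hp hq); exists a, b.
  move=> i hi; have := f_g i hi; rewrite hf => /(gmul_neq0 hS hred _ hp hq).
  by move=> [a [b [ha [hb e]]]]; exists a, b.
have nz : exists h, f h != 0 by exists (g 0%N); apply: f_g.
split => hn hlt; split => // p q hp hq hf; apply: NNPP => H;
  (have np : ~ is_monomial p by move=> m; apply: H; left);
  (have nq : ~ is_monomial q by move=> m; apply: H; right);
  have [c1 c2] := mono p q hp hq hf np nq.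
- exact: c1.
- exact: c2.
Qed.
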